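(* Let $G=(V,E)$ be a simple undirected graph with $n=|V|$, let $0\le\epsilon\le1$, let $X\subseteq V$, and let $t=|T_\epsilon(X)|$ (assume $t>0$). Then $T_\epsilon(X)$ is an $\frac{n\epsilon}{t}$-near clique.
   Context: $\Gamma(v)$ denotes the set of neighbors of $v$. For $Y\subseteq V$ and $0\le\eta\le1$: $K_\eta(Y)=\{v\in V: |\Gamma(v)\cap Y|\ge(1-\eta)|Y|\}$, and $T_\epsilon(X)=K_\epsilon(K_{2\epsilon^2}(X))\cap K_{2\epsilon^2}(X)$. Each undirected edge $\{u,v\}$ is counted as two directed edges; for $\gamma\ge0$, a set $D\subseteq V$ is a $\gamma$-near clique if $|\{(u,v)\in D\times D:\{u,v\}\in E\}|\ge(1-\gamma)|D|(|D|-1)$. *)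

(* Defs.v *)
From mathcomp Require Import all_boot all_order all_algebra.
Set Implicit Arguments. Unset Strict Implicit. Unset Printing Implicit Defensive.
Import Order.TTheory GRing.Theory Num.Theory.
Local Open Scope ring_scope.

(* A simple undirected graph on a finite vertex type V is given by a
   symmetric irreflexive relation e : rel V (checked as hypotheses). *)

Definition nbhd (V : finType) (e : rel V) (v : V) : {set V} := [set u | e v u].

Definition Kset (R : realFieldType) (V : finType) (e : rel V) (eta : R)
  (Y : {set V}) : {set V} :=
  [set v | (1 - eta) * (#|Y|%:R) <= (#|nbhd e v :&: Y|)%:R].

Definition Tset (R : realFieldType) (V : finType) (e : rel V) (eps : R)
  (X : {set V}) : {set V} :=
  Kset e eps (Kset e (2 * eps ^+ 2) X) :&: Kset e (2 * eps ^+ 2) X.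

Definition near_clique (R : realFieldType) (V : finType) (e : rel V) (gamma : R)
  (D : {set V}) : Prop :=
  (1 - gamma) * (#|D|%:R * (#|D|%:R - 1))
    <= (#|[set p : V * V | (p.1 \in D) && (p.2 \in D) && e p.1 p.2]|)%:R.

(* Main.v *)
Require Import Defs.
From mathcomp Require Import all_boot all_order all_algebra.
From mathcomp Require Import ring lra.
Import Order.TTheory GRing.Theory Num.Theory.
Local Open Scope ring_scope.

Lemma cardE_sum (V : finType) (e : rel V) (S : {set V}) :
  #|[set p : V * V | (p.1 \in S) && (p.2 \in S) && e p.1 p.2]|
  = (\sum_(v in S) #|nbhd e v :&: S|)%N.
Proof.
rewrite -sum1_card.
have -> : (\sum_(v in S) #|nbhd e v :&: S| = \sum_(v in S) \sum_(u in nbhd e v :&: S) 1)%N.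
  by apply: eq_bigr => v _; rewrite sum1_card.
rewrite pair_big_dep /=; apply: eq_bigl => -[a b] /=.
rewrite !inE /=.
by case: (a \in S); case: (b \in S); case: (e a b).
Qed.

Theorem lemma5p3 (R : realFieldType) (V : finType) (e : rel V)
  (e_sym : symmetric e) (e_irr : irreflexive e)
  (eps : R) (X : {set V}) :
  0 <= eps -> eps <= 1 ->
  (0 < #|Tset e eps X|)%N ->
  near_clique e (#|V|%:R * eps / (#|Tset e eps X|)%:R) (Tset e eps X).
Proof.
move=> e0 e1 tpos.
set K := Kset e (2 * eps ^+ 2) X.
set T := Tset e eps X.
have TK : T \subset K by apply/subsetP => v; rewrite inE => /andP[].
have Hv : forall v, v \in T ->
    (#|T|%:R : R) - eps * (#|K|%:R) <= (#|nbhd e v :&: T|)%:R.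
  move=> v; rewrite inE => /andP[]; rewrite inE => Hk _.
  have h1 : (#|nbhd e v :&: K| <= #|nbhd e v :&: T| + #|K :\: T|)%N.
    have sub : nbhd e v :&: K \subset (nbhd e v :&: T) :|: (K :\: T).
      apply/subsetP => u /setIP[a b]; apply/setUP.
      case: (boolP (u \in T)) => h.
        by left; apply/setIP; split.
      by right; apply/setDP; split.
    exact: leq_trans (subset_leq_card sub) (leq_card_setU _ _).
  have h2 : #|K :\: T| = (#|K| - #|T|)%N.
    by rewrite cardsD (setIidPr TK).
  have h3 : (#|T| <= #|K|)%N by apply: subset_leq_card.
  have : ((#|nbhd e v :&: K|)%:R : R) <= (#|nbhd e v :&: T|)%:R + (#|K|)%:R - (#|T|)%:R.
    rewrite -natrD -natrB; last by apply: leq_trans h3 (leq_addl _ _).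
    by rewrite ler_nat -addnBA // -h2.
  lra.
have cardE := @cardE_sum V e T.
set E := [set p : V * V | (p.1 \in T) && (p.2 \in T) && e p.1 p.2] in cardE *.
have kn : (#|K| <= #|V|)%N by apply: max_card.
set t : R := (#|T|)%:R.
set n : R := (#|V|)%:R.
have tge1 : 1 <= t by rewrite /t ler1n.
have Sge : t * (t - eps * n) <= (#|E|)%:R.
  rewrite cardE natr_sum.
  apply: le_trans (_ : \sum_(v in T) (t - eps * n) <= _).
    by rewrite sumr_const /t mulr_natl.
  apply: ler_sum => v vT; apply: le_trans (Hv v vT).
  rewrite /t lerD2l lerN2; apply: ler_wpM2l => //; by rewrite ler_nat.
rewrite /near_clique -/T -/E -/t -/n.
have -> : (1 - n * eps / t) * (t * (t - 1)) = (t - n * eps) * (t - 1).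
  by field; lra.
have E0 : 0 <= ((#|E|)%:R : R) by [].
case: (lerP (n * eps) t) => h.
  apply: le_trans Sge; nra.
apply: le_trans E0; nra.
Qed.
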